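(* Let $b\ge 2$ be an integer, $n=2^{b-2}$, and let $W^f\in\mathbb{R}^N$ be a nonzero vector whose components have pairwise distinct absolute values. Consider the problem $$\min_{s\in\mathbb{Z},\,Q\in\mathbb{R}^N}\ \|2^sQ-W^f\|_2^2\quad\text{subject to}\quad Q_i\in\{0,\pm 2^{1-n},\pm 2^{2-n},\dots,\pm 2^{-1},\pm 1\}\ \text{for all } i. \tag{P}$$ For a tuple $(k_0,\dots,k_{n-1})$ of nonnegative integers with $k_0+\dots+k_{n-1}\le N$, let $W^f_{[k_0]}$, $W^f_{[k_1]},\dots,W^f_{[k_{n-1}]}$ be as defined in the context, and set $$u(k)=\sum_{t=0}^{n-1}2^{-t}\|W^f_{[k_t]}\|_1,\qquad v(k)=\sum_{t=0}^{n-1}k_t\,2^{-2t}.$$ Define, for $u,v>0$, $$g(u,v)=v\left(2^{\lfloor \log_2 \frac{4u}{3v}\rfloor}-\frac{u}{v}\right)^2-\frac{u^2}{v}.$$ Let $(k_0^*,\dots,k_{n-1}^* )$ be a minimizer of $g(u(k),v(k))$ over all such tuples that are not identically zero. Then a minimizer $(s^*,Q^* )$ of (P) is given by $$Q^*=\sum_{t=0}^{n-1}2^{-t}\,\mathrm{sign}\big(W^f_{[k_t^*]}\big),\qquad s^*=\left\lfloor \log_2\frac{4\sum_{t=0}^{n-1}2^{-t}\|W^f_{[k^*_t]}\|_1}{3\sum_{t=0}^{n-1}k^*_t2^{-2t}}\right\rfloor,$$ and the optimal quantized vector is $2^{s^*}Q^*$.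
   Context: Notation: sort the indices of $W^f$ by decreasing $|W^f_i|$. Given nonnegative integers $k_0,\dots,k_{n-1}$ with $\sum_t k_t\le N$, the vector $W^f_{[k_0]}\in\mathbb{R}^N$ keeps the $k_0$ components of $W^f$ of largest magnitude and sets all other components to zero; $W^f_{[k_1]}$ keeps the next $k_1$ largest-magnitude components (those ranked $k_0+1,\dots,k_0+k_1$) and zeros out all others; in general $W^f_{[k_t]}$ keeps the components ranked $k_0+\dots+k_{t-1}+1,\dots,k_0+\dots+k_t$ in magnitude and zeros out the rest. $\mathrm{sign}$ is applied componentwise with $\mathrm{sign}(0)=0$. $\lfloor\cdot\rfloor$ is the floor function and $\|\cdot\|_1$ the $\ell^1$ norm. *)

(* Defs.v *)
From Stdlib Require Export Reals Lra ZArith.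
Open Scope R_scope.

Fixpoint rsum (m : nat) (f : nat -> R) : R :=
  match m with O => 0 | S m' => rsum m' f + f m' end.

Fixpoint nsum (m : nat) (f : nat -> nat) : nat :=
  match m with O => 0%nat | S m' => (nsum m' f + f m')%nat end.

Fixpoint ncount (m : nat) (P : nat -> bool) : nat :=
  match m with O => 0%nat | S m' => (ncount m' P + (if P m' then 1 else 0))%nat end.

Definition Rsign (x : R) : R :=
  if Rlt_dec 0 x then 1 else if Rlt_dec x 0 then -1 else 0.

Definition log2 (x : R) : R := ln x / ln 2.

(* floor function: Int_part x = up x - 1 is the floor of x *)
Definition Rfloor (x : R) : Z := Int_part x.

(* Vectors in R^N are functions nat -> R; only indices 0..N-1 matter. *)

(* 0-based rank of component i of W in decreasing order of magnitude:
   number of components with strictly larger magnitude *)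
Definition rank (N : nat) (W : nat -> R) (i : nat) : nat :=
  ncount N (fun j => if Rlt_dec (Rabs (W i)) (Rabs (W j)) then true else false).

Definition offset (k : nat -> nat) (t : nat) : nat := nsum t k.

(* W^f_[k_t]: keeps components of (0-based) rank in [offset t, offset t + k t) *)
Definition Wblock (N : nat) (W : nat -> R) (k : nat -> nat) (t : nat) (i : nat) : R :=
  if Nat.ltb i N then
    if andb (Nat.leb (offset k t) (rank N W i))
            (Nat.ltb (rank N W i) (offset k t + k t)) then W i else 0
  else 0.

Definition norm1 (N : nat) (x : nat -> R) : R := rsum N (fun i => Rabs (x i)).

Definition sqnorm_dist (N : nat) (x y : nat -> R) : R :=
  rsum N (fun i => (x i - y i) ^ 2).

Definition u_of (n N : nat) (W : nat -> R) (k : nat -> nat) : R :=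
  rsum n (fun t => / 2 ^ t * norm1 N (Wblock N W k t)).

Definition v_of (n : nat) (k : nat -> nat) : R :=
  rsum n (fun t => INR (k t) * / 2 ^ (2 * t)).

Definition g (u v : R) : R :=
  v * (powerRZ 2 (Rfloor (log2 (4 * u / (3 * v)))) - u / v) ^ 2 - u ^ 2 / v.

Definition admissible (n N : nat) (k : nat -> nat) : Prop :=
  (nsum n k <= N)%nat /\ exists t, (t < n)%nat /\ k t <> 0%nat.

Definition feasibleQ (n N : nat) (Q : nat -> R) : Prop :=
  forall i, (i < N)%nat ->
    Q i = 0 \/ exists j, (j < n)%nat /\ (Q i = / 2 ^ j \/ Q i = - / 2 ^ j).

Definition Qstar (n N : nat) (W : nat -> R) (k : nat -> nat) (i : nat) : R :=
  rsum n (fun t => / 2 ^ t * Rsign (Wblock N W k t i)).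

Definition sstar (n N : nat) (W : nat -> R) (k : nat -> nat) : Z :=
  Rfloor (log2 (4 * u_of n N W k / (3 * v_of n k))).

Definition objective (N : nat) (W : nat -> R) (s : Z) (Q : nat -> R) : R :=
  sqnorm_dist N (fun i => powerRZ 2 s * Q i) W.

(* Main.v *)
Require Import Defs.
From Stdlib Require Import Reals Lra Lia ZArith List.
Open Scope R_scope.

Lemma rsum_ext m f g : (forall i, (i < m)%nat -> f i = g i) -> rsum m f = rsum m g.
Proof. induction m; simpl; intros H; auto. rewrite IHm by (intros; apply H; lia). rewrite H by lia. auto. Qed.
Lemma rsum_plus m f g : rsum m (fun i => f i + g i) = rsum m f + rsum m g.
Proof. induction m; simpl; [lra|]. rewrite IHm. lra. Qed.
Lemma rsum_scal m c f : rsum m (fun i => c * f i) = c * rsum m f.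
Proof. induction m; simpl; [lra|]. rewrite IHm. lra. Qed.
Lemma rsum_minus m f g : rsum m (fun i => f i - g i) = rsum m f - rsum m g.
Proof. induction m; simpl; [lra|]. rewrite IHm. lra. Qed.
Lemma rsum_le m f g : (forall i, (i < m)%nat -> f i <= g i) -> rsum m f <= rsum m g.
Proof. induction m; simpl; intros H; [lra|]. assert (rsum m f <= rsum m g) by (apply IHm; intros; apply H; lia). specialize (H m ltac:(lia)). lra. Qed.
Lemma rsum_zero m f : (forall i, (i < m)%nat -> f i = 0) -> rsum m f = 0.
Proof. induction m; simpl; intros H; [lra|]. rewrite IHm by (intros; apply H; lia). rewrite H by lia. lra. Qed.
Lemma rsum_nonneg m f : (forall i, (i < m)%nat -> 0 <= f i) -> 0 <= rsum m f.
Proof. intros H. rewrite <- (rsum_zero m (fun _ => 0)) by auto. apply rsum_le; auto. Qed.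
Lemma rsum_swap n N (F : nat -> nat -> R) :
  rsum n (fun t => rsum N (fun i => F t i)) = rsum N (fun i => rsum n (fun t => F t i)).
Proof. induction n; simpl. rewrite rsum_zero; auto. rewrite IHn. rewrite <- rsum_plus. auto. Qed.
Lemma rsum_single m f t : (t < m)%nat -> (forall t', (t' < m)%nat -> t' <> t -> f t' = 0) -> rsum m f = f t.
Proof. induction m; simpl; intros Ht H; [lia|].
  destruct (Nat.eq_dec t m).
  - subst. rewrite rsum_zero. lra. intros; apply H; lia.
  - rewrite IHm by (try lia; intros; apply H; lia). rewrite (H m) by lia. lra. Qed.
Lemma sq_rsum_disj m f : (forall t t', (t < m)%nat -> (t' < m)%nat -> t <> t' -> f t * f t' = 0) ->
  (rsum m f)^2 = rsum m (fun t => f t ^ 2).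
Proof. induction m; simpl; intros H; [lra|].
  assert (E: rsum m f * f m = 0).
  { rewrite Rmult_comm, <- rsum_scal. apply rsum_zero. intros. apply H; lia. }
  assert (I := IHm ltac:(intros; apply H; lia)). simpl in I. rewrite <- I. nra. Qed.

Definition ind (b : bool) : R := if b then 1 else 0.
Lemma INR_ncount N P : INR (ncount N P) = rsum N (fun i => ind (P i)).
Proof. induction N; simpl; auto. rewrite plus_INR, IHN. unfold ind. destruct (P N); simpl; lra. Qed.
Lemma INR_nsum n k : INR (nsum n k) = rsum n (fun t => INR (k t)).
Proof. induction n; simpl; auto. rewrite plus_INR, IHn. auto. Qed.

Lemma Rpower_log2 y : 0 < y -> Rpower 2 (log2 y) = y.
Proof. intros. unfold Rpower, log2. assert (0 < ln 2) by (apply ln_lt_0 || (rewrite <- ln_1; apply ln_increasing; lra)).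
  replace (ln y / ln 2 * ln 2) with (ln y) by (field; lra). apply exp_ln; auto. Qed.

Lemma pow_floor y : 0 < y -> powerRZ 2 (Rfloor (log2 y)) <= y /\ y < 2 * powerRZ 2 (Rfloor (log2 y)).
Proof. intros Hy. unfold Rfloor. destruct (base_Int_part (log2 y)) as [H1 H2].
  rewrite powerRZ_Rpower by lra. split.
  - rewrite <- (Rpower_log2 y) at 2 by auto. apply Rle_Rpower; lra.
  - rewrite <- (Rpower_log2 y) at 1 by auto. rewrite <- (Rpower_1 2) at 2 by lra.
    rewrite <- Rpower_plus. apply Rpower_lt; lra. Qed.

Lemma powerRZ_mono s f : (s <= f)%Z -> powerRZ 2 s <= powerRZ 2 f.
Proof. intros. rewrite !powerRZ_Rpower by lra. apply Rle_Rpower; [lra|]. apply IZR_le; auto. Qed.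
Lemma powerRZ_S f : powerRZ 2 (f + 1) = 2 * powerRZ 2 f.
Proof. rewrite powerRZ_add by lra. simpl. lra. Qed.
Lemma powerRZ_pos s : 0 < powerRZ 2 s.
Proof. apply powerRZ_lt. lra. Qed.

Lemma scale_lemma u v s : 0 < u -> 0 < v ->
  g u v <= v * (powerRZ 2 s)^2 - 2 * powerRZ 2 s * u.
Proof. intros Hu Hv. unfold g.
  set (y := 4 * u / (3 * v)).
  assert (Hy : 0 < y) by (unfold y; apply Rdiv_lt_0_compat; lra).
  destruct (pow_floor y Hy) as [F1 F2]. set (f := Rfloor (log2 y)) in *.
  set (cs := powerRZ 2 f) in *. set (c := powerRZ 2 s).
  set (a := u / v).
  assert (Ha : y = 4 * a / 3) by (unfold y, a; field; lra).
  assert (Hc : 0 < c) by apply powerRZ_pos.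
  assert (Hcs : 0 < cs) by apply powerRZ_pos.
  assert (E1 : v * c ^ 2 - 2 * c * u = v * (c - a)^2 - u^2/v) by (unfold a; field; lra).
  rewrite E1.
  cut ((cs - a)^2 <= (c - a)^2). { intros. apply Rplus_le_compat_r. apply Rmult_le_compat_l; lra. }
  destruct (Z.lt_trichotomy s f) as [Hs|[Hs|Hs]].
  - assert (c <= powerRZ 2 (f - 1)) by (apply powerRZ_mono; lia).
    assert (cs = 2 * powerRZ 2 (f-1)) by (unfold cs; rewrite <- powerRZ_S; f_equal; lia).
    assert (A1: c - cs <= 0) by lra. assert (A2: c + cs - 2*a <= 0) by lra.
    assert (A3 : 0 <= (c - cs) * (c + cs - 2*a)) by nra. nra.
  - replace c with cs by (unfold c, cs; rewrite Hs; auto). lra.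
  - assert (powerRZ 2 (f+1) <= c) by (apply powerRZ_mono; lia). rewrite powerRZ_S in H. fold cs in H.
    assert (A1: 0 <= c - cs) by lra. assert (A2: 0 <= c + cs - 2*a) by lra.
    assert (A3 : 0 <= (c - cs) * (c + cs - 2*a)) by nra. nra.
Qed.

Lemma g_neg u v : 0 < u -> 0 < v -> g u v < 0.
Proof. intros Hu Hv. unfold g.
  set (y := 4 * u / (3 * v)).
  assert (Hy : 0 < y) by (unfold y; apply Rdiv_lt_0_compat; lra).
  destruct (pow_floor y Hy) as [F1 F2]. set (cs := powerRZ 2 _) in *.
  assert (Hcs : 0 < cs) by apply powerRZ_pos.
  set (a := u / v). assert (Ha : y = 4 * a / 3) by (unfold y, a; field; lra).
  assert (E: u^2/v = v * a^2) by (unfold a; field; lra). rewrite E.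
  assert (0 < a) by (unfold a; apply Rdiv_lt_0_compat; lra).
  assert ((cs - a)^2 < a^2) by nra. nra. Qed.
Lemma ncount_le N P : (ncount N P <= N)%nat.
Proof. induction N; simpl; auto. destruct (P N); lia. Qed.
Lemma ncount_mono N P P' : (forall x, (x < N)%nat -> P x = true -> P' x = true) -> (ncount N P <= ncount N P')%nat.
Proof. induction N; simpl; intros H; auto. assert (IH := IHN ltac:(intros; apply H; auto)).
  specialize (H N ltac:(lia)). destruct (P N), (P' N); try lia; try (specialize (H eq_refl); discriminate). Qed.
Lemma ncount_strict N P P' : (forall x, (x < N)%nat -> P x = true -> P' x = true) ->
  (exists j, (j < N)%nat /\ P' j = true /\ P j = false) -> (ncount N P < ncount N P')%nat.
Proof. induction N; simpl; intros H [j [Hj [H1 H2]]]; [lia|].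
  destruct (Nat.eq_dec j N).
  - subst. rewrite H1, H2. assert (ncount N P <= ncount N P')%nat by (apply ncount_mono; intros; apply H; auto). lia.
  - assert (IH := IHN ltac:(intros; apply H; auto) ltac:(exists j; repeat split; auto; lia)).
    specialize (H N ltac:(lia)). destruct (P N), (P' N); try lia; try (specialize (H eq_refl); discriminate). Qed.
Lemma ncount_ext N P P' : (forall x, (x < N)%nat -> P x = P' x) -> ncount N P = ncount N P'.
Proof. induction N; simpl; intros H; auto. rewrite IHN by auto. rewrite H by lia. auto. Qed.
Lemma ncount_compl N P : (ncount N P + ncount N (fun x => negb (P x)) = N)%nat.
Proof. induction N; simpl; auto. destruct (P N); simpl; lia. Qed.
Lemma ncount_filter N P : ncount N P = length (filter P (seq 0 N)).
Proof. induction N; [simpl; auto|]. rewrite seq_S, filter_app, length_app, <- IHN. simpl. destruct (P N); simpl; lia. Qed.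

Definition gtb (x y : R) : bool := if Rlt_dec x y then true else false.

Section Rank.
Variable N : nat. Variable W : nat -> R.

Lemma rank_lt i : (i < N)%nat -> (rank N W i < N)%nat.
Proof. intros Hi. unfold rank. apply (Nat.lt_le_trans _ (ncount N (fun _ => true))).
  - apply ncount_strict. auto. exists i. split; [auto|]. split; [auto|]. destruct Rlt_dec; auto. lra.
  - clear. induction N; simpl; lia. Qed.

Lemma rank_mono i j : Rabs (W j) <= Rabs (W i) -> (rank N W i <= rank N W j)%nat.
Proof. intros H. unfold rank. apply ncount_mono. intros x _. do 2 destruct Rlt_dec; auto; lra. Qed.

Lemma rank_lt_abs i j : (rank N W j < rank N W i)%nat -> Rabs (W i) < Rabs (W j).
Proof. intros H. destruct (Rlt_le_dec (Rabs (W i)) (Rabs (W j))); auto.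
  apply rank_mono in r. lia. Qed.

Hypothesis Hd : forall i j, (i < N)%nat -> (j < N)%nat -> i <> j -> Rabs (W i) <> Rabs (W j).

Lemma rank_strict i j : (i < N)%nat -> (j < N)%nat -> Rabs (W i) < Rabs (W j) -> (rank N W j < rank N W i)%nat.
Proof. intros Hi Hj H. unfold rank. apply ncount_strict.
  - intros x _. do 2 destruct Rlt_dec; auto; lra.
  - exists j. split; auto. do 2 destruct Rlt_dec; auto; lra. Qed.

Lemma rank_inj i j : (i < N)%nat -> (j < N)%nat -> rank N W i = rank N W j -> i = j.
Proof. intros Hi Hj E. destruct (Nat.eq_dec i j); auto. exfalso.
  assert (Hn := Hd i j Hi Hj n).
  destruct (Rlt_le_dec (Rabs (W i)) (Rabs (W j))).
  - apply rank_strict in r; auto. lia.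
  - assert (Rabs (W j) < Rabs (W i)) by lra. apply rank_strict in H; auto. lia. Qed.

Lemma count_ge_rank m : (ncount N (fun i => Nat.leb m (rank N W i)) <= N - m)%nat.
Proof. rewrite ncount_filter.
  set (l := filter _ _).
  assert (ND : NoDup (map (rank N W) l)).
  { apply NoDup_map_NoDup_ForallPairs.
    - intros x y Hx Hy E. unfold l in *. apply filter_In in Hx, Hy. destruct Hx as [Hx _], Hy as [Hy _]. apply in_seq in Hx, Hy.
      apply rank_inj; lia.
    - apply NoDup_filter, seq_NoDup. }
  assert (I : incl (map (rank N W) l) (seq m (N - m))).
  { intros r Hr. apply in_map_iff in Hr. destruct Hr as [x [<- Hx]]. unfold l in Hx.
    apply filter_In in Hx. destruct Hx as [Hx Hm]. apply in_seq in Hx. apply Nat.leb_le in Hm.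
    apply in_seq. assert (H := rank_lt x ltac:(lia)). lia. }
  assert (L := NoDup_incl_length ND I). rewrite length_map, length_seq in L. auto. Qed.

Lemma count_lt_rank m : (m <= N)%nat -> (m <= ncount N (fun i => Nat.ltb (rank N W i) m))%nat.
Proof. intros Hm. assert (H := count_ge_rank m). assert (C := ncount_compl N (fun i => Nat.ltb (rank N W i) m)).
  assert (E : ncount N (fun x => negb (Nat.ltb (rank N W x) m)) = ncount N (fun i => Nat.leb m (rank N W i))).
  { apply ncount_ext. intros x _. destruct (Nat.ltb_spec (rank N W x) m), (Nat.leb_spec m (rank N W x)); auto; lia. }
  lia. Qed.
End Rank.
Section TopM.
Variable N : nat. Variable W : nat -> R.
Hypothesis Hd : forall i j, (i < N)%nat -> (j < N)%nat -> i <> j -> Rabs (W i) <> Rabs (W j).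
Variable m : nat.
Fixpoint mx (K : nat) : R := match K with O => 0 | S K' =>
  Rmax (mx K') (if Nat.leb m (rank N W K') then Rabs (W K') else 0) end.
Lemma mx_nonneg K : 0 <= mx K.
Proof. induction K; simpl. lra. apply (Rle_trans _ _ _ IHK). apply Rmax_l. Qed.
Lemma mx_ge K i : (i < K)%nat -> (m <= rank N W i)%nat -> Rabs (W i) <= mx K.
Proof. induction K; simpl; intros Hi Hm. lia.
  destruct (Nat.eq_dec i K).
  - subst. apply Nat.leb_le in Hm. rewrite Hm. apply Rmax_r.
  - apply (Rle_trans _ _ _ (IHK ltac:(lia) Hm)). apply Rmax_l. Qed.
Lemma mx_le K j : (rank N W j < m)%nat -> mx K <= Rabs (W j).
Proof. intros Hj. induction K; simpl. apply Rabs_pos.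
  apply Rmax_lub; auto. destruct (Nat.leb_spec m (rank N W K)). 
  - left. apply (rank_lt_abs N W). lia.
  - apply Rabs_pos. Qed.

Lemma rsum_one K : rsum K (fun _ => 1) = INR K.
Proof. induction K; simpl; auto. rewrite IHK. destruct K; simpl; lra. Qed.

Lemma topM F : (forall i, (i < N)%nat -> 0 <= F i <= 1) -> rsum N F <= INR m ->
  rsum N (fun i => F i * Rabs (W i)) <= rsum N (fun i => ind (Nat.ltb (rank N W i) m) * Rabs (W i)).
Proof. intros HF Hs. set (T := fun i => ind (Nat.ltb (rank N W i) m)).
  set (th := mx N).
  assert (HTF : rsum N F <= rsum N T).
  { destruct (Nat.le_gt_cases m N).
    - unfold T. rewrite <- INR_ncount. apply (Rle_trans _ _ _ Hs). apply le_INR. apply count_lt_rank; auto.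
    - apply (Rle_trans _ (rsum N (fun _ => 1))). apply rsum_le. intros; apply HF; auto.
      right. apply rsum_ext. intros i Hi. unfold T, ind. assert (HH := rank_lt N W i Hi).
      destruct (Nat.ltb_spec (rank N W i) m); auto; lia. }
  assert (K : rsum N (fun i => (T i - F i) * th) <= rsum N (fun i => (T i - F i) * Rabs (W i))).
  { apply rsum_le. intros i Hi. specialize (HF i Hi). unfold T, ind.
    destruct (Nat.ltb_spec (rank N W i) m).
    - assert (th <= Rabs (W i)) by (apply mx_le; auto). apply Rmult_le_compat_l; lra.
    - assert (Rabs (W i) <= th) by (apply mx_ge; auto).
      assert (0 <= F i * (th - Rabs (W i))) by (apply Rmult_le_pos; lra). nra. }
  assert (K2 : rsum N (fun i => (T i - F i) * th) = th * (rsum N T - rsum N F)).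
  { rewrite <- rsum_minus, <- rsum_scal. apply rsum_ext. intros; lra. }
  assert (K3 : rsum N (fun i => (T i - F i) * Rabs (W i)) = rsum N (fun i => T i * Rabs (W i)) - rsum N (fun i => F i * Rabs (W i))).
  { rewrite <- rsum_minus. apply rsum_ext. intros; lra. }
  assert (0 <= th) by apply mx_nonneg.
  assert (0 <= th * (rsum N T - rsum N F)) by (apply Rmult_le_pos; lra). change (rsum N (fun i => F i * Rabs (W i)) <= rsum N (fun i => T i * Rabs (W i))). lra. Qed.
End TopM.
Definition Aof N W m := rsum N (fun i => ind (Nat.ltb (rank N W i) m) * Rabs (W i)).

Lemma offset_S k t : offset k (S t) = (offset k t + k t)%nat.
Proof. reflexivity. Qed.
Lemma offset_mono k t t' : (t <= t')%nat -> (offset k t <= offset k t')%nat.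
Proof. induction 1; auto. rewrite offset_S. lia. Qed.

Lemma ind_interval a b r : (a <= b)%nat ->
  ind (Nat.leb a r && Nat.ltb r b) = ind (Nat.ltb r b) - ind (Nat.ltb r a).
Proof. intros. unfold ind. destruct (Nat.leb_spec a r), (Nat.ltb_spec r b), (Nat.ltb_spec r a); simpl; try lra; lia. Qed.

Lemma norm1_block N W k t : norm1 N (Wblock N W k t) = Aof N W (offset k t + k t) - Aof N W (offset k t).
Proof. unfold norm1, Aof. rewrite <- rsum_minus. apply rsum_ext. intros i Hi.
  unfold Wblock. apply Nat.ltb_lt in Hi. rewrite Hi.
  rewrite <- Rmult_minus_distr_r, <- ind_interval by lia. unfold ind.
  destruct (andb _ _); rewrite ?Rabs_R0; lra. Qed.

Lemma u_formula n N W k : u_of n N W k =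
  rsum n (fun t => / 2 ^ t * (Aof N W (offset k t + k t) - Aof N W (offset k t))).
Proof. unfold u_of. apply rsum_ext. intros. rewrite norm1_block. auto. Qed.

Lemma Rsign_mul x : Rsign x * x = Rabs x.
Proof. unfold Rsign. destruct Rlt_dec. rewrite Rabs_right; lra. destruct Rlt_dec. rewrite Rabs_left; lra.
  assert (x = 0) by lra. subst. rewrite Rabs_R0. lra. Qed.
Lemma Rsign_0 : Rsign 0 = 0.
Proof. unfold Rsign. destruct (Rlt_dec 0 0); [lra|]. destruct (Rlt_dec 0 0); [lra|]. auto. Qed.

Lemma block_disj N W k t t' i : t <> t' -> Wblock N W k t i = 0 \/ Wblock N W k t' i = 0.
Proof. intros H. unfold Wblock. destruct (Nat.ltb i N); auto.
  set (r := rank N W i).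
  destruct (Nat.leb_spec (offset k t) r), (Nat.ltb_spec r (offset k t + k t)); simpl; auto.
  destruct (Nat.leb_spec (offset k t') r), (Nat.ltb_spec r (offset k t' + k t')); simpl; auto.
  exfalso. destruct (Nat.lt_ge_cases t t') as [L|L].
  - assert (M: (offset k (S t) <= offset k t')%nat) by (apply offset_mono; lia). rewrite offset_S in M. lia.
  - assert (M: (offset k (S t') <= offset k t)%nat) by (apply offset_mono; lia). rewrite offset_S in M. lia.
Qed.

Lemma QW_star n N W k i : Qstar n N W k i * W i = rsum n (fun t => / 2 ^ t * Rabs (Wblock N W k t i)).
Proof. unfold Qstar. rewrite Rmult_comm, <- rsum_scal. apply rsum_ext. intros t _.
  rewrite <- Rsign_mul. unfold Wblock. destruct (Nat.ltb i N); [destruct (andb _ _)|]; rewrite ?Rsign_0; lra. Qed.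

Lemma sumQW_star n N W k : rsum N (fun i => Qstar n N W k i * W i) = u_of n N W k.
Proof. unfold u_of, norm1. rewrite (rsum_ext N _ _ (fun i _ => QW_star n N W k i)).
  rewrite <- rsum_swap. apply rsum_ext. intros. rewrite <- rsum_scal. auto. Qed.
Lemma count_int N W (Hd : forall i j, (i < N)%nat -> (j < N)%nat -> i <> j -> Rabs (W i) <> Rabs (W j)) a b :
  (ncount N (fun i => andb (Nat.leb a (rank N W i)) (Nat.ltb (rank N W i) b)) <= b - a)%nat.
Proof. rewrite ncount_filter.
  set (l := filter _ _).
  assert (ND : NoDup (map (rank N W) l)).
  { apply NoDup_map_NoDup_ForallPairs.
    - intros x y Hx Hy E. unfold l in *. apply filter_In in Hx, Hy. destruct Hx as [Hx _], Hy as [Hy _]. apply in_seq in Hx, Hy.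
      apply (rank_inj N W Hd); lia.
    - apply NoDup_filter, seq_NoDup. }
  assert (I : incl (map (rank N W) l) (seq a (b - a))).
  { intros r Hr. apply in_map_iff in Hr. destruct Hr as [x [<- Hx]]. unfold l in Hx.
    apply filter_In in Hx. destruct Hx as [Hx Hm]. apply andb_prop in Hm. destruct Hm as [H1 H2].
    apply Nat.leb_le in H1. apply Nat.ltb_lt in H2. apply in_seq. lia. }
  assert (L := NoDup_incl_length ND I). rewrite length_map, length_seq in L. auto. Qed.

Lemma inv2_sq t : (/ 2 ^ t) ^ 2 = / 2 ^ (2 * t).
Proof. rewrite pow_mult. rewrite pow_inv. f_equal. rewrite <- !pow_mult. f_equal. lia. Qed.

Lemma Rsign_sq_le x : Rsign x ^ 2 <= 1.
Proof. unfold Rsign. destruct Rlt_dec; [lra|]. destruct Rlt_dec; lra. Qed.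

Lemma Qstar_sq n N W k i : Qstar n N W k i ^ 2 = rsum n (fun t => / 2 ^ (2 * t) * Rsign (Wblock N W k t i) ^ 2).
Proof. unfold Qstar. rewrite sq_rsum_disj.
  - apply rsum_ext. intros. rewrite <- inv2_sq. ring.
  - intros t t' _ _ H. destruct (block_disj N W k t t' i H) as [E|E]; rewrite E, Rsign_0; ring. Qed.

Lemma sumQsq_star n N W k (Hd : forall i j, (i < N)%nat -> (j < N)%nat -> i <> j -> Rabs (W i) <> Rabs (W j)) :
  rsum N (fun i => Qstar n N W k i ^ 2) <= v_of n k.
Proof. rewrite (rsum_ext N _ _ (fun i _ => Qstar_sq n N W k i)). rewrite <- rsum_swap.
  unfold v_of. apply rsum_le. intros t _. rewrite rsum_scal. rewrite Rmult_comm.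
  apply Rmult_le_compat_r. { left. apply Rinv_0_lt_compat, pow_lt. lra. }
  apply (Rle_trans _ (rsum N (fun i => ind (andb (Nat.leb (offset k t) (rank N W i)) (Nat.ltb (rank N W i) (offset k t + k t)))))).
  - apply rsum_le. intros i Hi. unfold Wblock. apply Nat.ltb_lt in Hi. rewrite Hi. unfold ind.
    destruct (andb _ _). apply Rsign_sq_le. rewrite Rsign_0. lra.
  - rewrite <- INR_ncount. apply le_INR. assert (H := count_int N W Hd (offset k t) (offset k t + k t)). lia. Qed.

From Stdlib Require Import Classical.
Lemma Qstar_feas n N W k : feasibleQ n N (Qstar n N W k).
Proof. intros i Hi. destruct (classic (exists t, (t < n)%nat /\ Wblock N W k t i <> 0)) as [[t [Ht Hn]]|H].
  - right. exists t. split; auto. unfold Qstar. rewrite (rsum_single _ _ t Ht).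
    + unfold Rsign. destruct Rlt_dec. left; lra. destruct Rlt_dec. right; lra. exfalso; lra.
    + intros t' _ Ht'. destruct (block_disj N W k t t' i (fun e => Ht' (eq_sym e))) as [E|E]. contradiction. rewrite E, Rsign_0. lra.
  - left. unfold Qstar. apply rsum_zero. intros t Ht. destruct (Req_EM_T (Wblock N W k t i) 0) as [E|E].
    rewrite E, Rsign_0; lra. exfalso. apply H. eauto. Qed.
Lemma abel n (w x : nat -> R) : (forall t, 0 <= w (S t) <= w t) -> (forall t, (t <= n)%nat -> 0 <= x t) -> x O = 0 ->
  forall m, (m <= n)%nat -> w m * x m <= rsum m (fun t => w t * (x (S t) - x t)).
Proof. intros Hw Hx H0. induction m; intros Hm; simpl. rewrite H0; lra.
  assert (IH := IHm ltac:(lia)). assert (X := Hx (S m) Hm). destruct (Hw m).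
  assert (w (S m) * x (S m) <= w m * x (S m)) by (apply Rmult_le_compat_r; lra). lra. Qed.

Lemma rsum_ind_eq t j : rsum t (fun t' => ind (Nat.eqb t' j)) = ind (Nat.ltb j t).
Proof. induction t; simpl. unfold ind. destruct (Nat.ltb_spec j 0); [lia|lra].
  rewrite IHt. unfold ind. destruct (Nat.eqb_spec t j), (Nat.ltb_spec j t), (Nat.ltb_spec j (S t)); try lia; lra. Qed.

Lemma inv2_pos t : 0 < / 2 ^ t.
Proof. apply Rinv_0_lt_compat, pow_lt. lra. Qed.
Lemma inv2_inj t t' : / 2 ^ t = / 2 ^ t' -> t = t'.
Proof. intros E. destruct (Nat.lt_total t t') as [L|[L|L]]; auto; exfalso.
  - assert (2 ^ t < 2 ^ t') by (apply Rlt_pow; [lra|lia]). assert (0 < 2^t) by (apply pow_lt; lra).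
    apply Rinv_lt_contravar in H; [lra|]. nra.
  - assert (2 ^ t' < 2 ^ t) by (apply Rlt_pow; [lra|lia]). assert (0 < 2^t') by (apply pow_lt; lra).
    apply Rinv_lt_contravar in H; [lra|]. nra. Qed.
Lemma inv2_dec t : 0 <= / 2 ^ (S t) <= / 2 ^ t.
Proof. split. left; apply inv2_pos. simpl. rewrite Rinv_mult. assert (0 < / 2 ^ t) by apply inv2_pos. lra. Qed.

Definition eqbR (x y : R) : bool := if Req_EM_T x y then true else false.

Section GenQ.
Variables (n N : nat) (W Q : nat -> R).
Hypothesis HQ : feasibleQ n N Q.
Hypothesis Hd : forall i j, (i < N)%nat -> (j < N)%nat -> i <> j -> Rabs (W i) <> Rabs (W j).
Definition ee t i := ind (eqbR (Rabs (Q i)) (/ 2 ^ t)).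
Definition kQ t := ncount N (fun i => eqbR (Rabs (Q i)) (/ 2 ^ t)).

Lemma Qlev i : (i < N)%nat -> (Q i = 0 /\ forall t, ee t i = 0) \/
   exists j, (j < n)%nat /\ Rabs (Q i) = / 2 ^ j /\ forall t, ee t i = ind (Nat.eqb t j).
Proof. intros Hi. destruct (HQ i Hi) as [E|[j [Hj H]]].
  - left. split; auto. intros t. unfold ee, eqbR. rewrite E, Rabs_R0. destruct Req_EM_T; auto.
    assert (X := inv2_pos t). lra.
  - right. exists j. assert (A : Rabs (Q i) = / 2 ^ j).
    { assert (X := inv2_pos j). destruct H as [H|H]; rewrite H. rewrite Rabs_right; lra. rewrite Rabs_Ropp, Rabs_right; lra. }
    repeat split; auto. intros t. unfold ee, eqbR. rewrite A. destruct Req_EM_T as [e|e]; destruct (Nat.eqb_spec t j); auto.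
    apply inv2_inj in e. lia. subst. tauto. Qed.

Lemma absQ i : (i < N)%nat -> Rabs (Q i) = rsum n (fun t => / 2 ^ t * ee t i).
Proof. intros Hi. destruct (Qlev i Hi) as [[E H]|[j [Hj [A H]]]].
  - rewrite E, Rabs_R0. symmetry. apply rsum_zero. intros. rewrite H. lra.
  - rewrite (rsum_single _ _ j Hj). rewrite H, A. unfold ind. rewrite Nat.eqb_refl. lra.
    intros t' _ Ht. rewrite H. unfold ind. destruct (Nat.eqb_spec t' j). contradiction. lra. Qed.

Lemma sqQ i : (i < N)%nat -> Q i ^ 2 = rsum n (fun t => / 2 ^ (2 * t) * ee t i).
Proof. intros Hi. destruct (Qlev i Hi) as [[E H]|[j [Hj [A H]]]].
  - rewrite E. symmetry. rewrite rsum_zero. lra. intros. rewrite H. lra.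
  - rewrite (rsum_single _ _ j Hj). rewrite H. unfold ind. rewrite Nat.eqb_refl.
    rewrite <- inv2_sq, <- A. rewrite pow2_abs. lra.
    intros t' _ Ht. rewrite H. unfold ind. destruct (Nat.eqb_spec t' j). contradiction. lra. Qed.

Lemma sumQsq : rsum N (fun i => Q i ^ 2) = v_of n kQ.
Proof. rewrite (rsum_ext N _ _ sqQ). rewrite <- rsum_swap. unfold v_of. apply rsum_ext. intros t _.
  rewrite rsum_scal. unfold kQ. rewrite INR_ncount. rewrite Rmult_comm. reflexivity. Qed.

Definition EE t i := rsum t (fun t' => ee t' i).
Lemma EE_bound t i : (i < N)%nat -> 0 <= EE t i <= 1.
Proof. intros Hi. unfold EE. destruct (Qlev i Hi) as [[E H]|[j [Hj [A H]]]].
  - rewrite rsum_zero. lra. intros; apply H.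
  - rewrite (rsum_ext _ _ _ (fun t' _ => H t')). rewrite rsum_ind_eq. unfold ind. destruct (Nat.ltb j t); lra. Qed.

Lemma sumEE t : rsum N (fun i => EE t i) = INR (offset kQ t).
Proof. unfold EE, offset. rewrite <- rsum_swap, INR_nsum. apply rsum_ext. intros. unfold kQ. rewrite INR_ncount. reflexivity. Qed.

Definition SS t := rsum N (fun i => EE t i * Rabs (W i)).

Lemma SS_le t : SS t <= Aof N W (offset kQ t).
Proof. apply topM; auto. apply EE_bound. rewrite sumEE. lra. Qed.

Lemma sumQW : rsum N (fun i => Q i * W i) <= u_of n N W kQ.
Proof.
  apply (Rle_trans _ (rsum N (fun i => Rabs (Q i) * Rabs (W i)))).
  { apply rsum_le. intros. rewrite <- Rabs_mult. apply Rle_abs. }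
  rewrite (rsum_ext N _ (fun i => rsum n (fun t => / 2 ^ t * (ee t i * Rabs (W i))))).
  2:{ intros i Hi. rewrite absQ by auto. rewrite Rmult_comm, <- rsum_scal. apply rsum_ext. intros; lra. }
  rewrite <- rsum_swap.
  rewrite (rsum_ext n _ (fun t => / 2 ^ t * (SS (S t) - SS t))).
  2:{ intros t _. rewrite rsum_scal. f_equal. unfold SS. rewrite <- rsum_minus. apply rsum_ext.
      intros. unfold EE. simpl. lra. }
  rewrite u_formula.
  set (x := fun t => Aof N W (offset kQ t) - SS t).
  assert (AB := abel n (fun t => / 2 ^ t) x inv2_dec).
  assert (X0 : x O = 0).
  { unfold x, Aof, SS, EE. simpl. rewrite !rsum_zero; try lra; intros; unfold ind; simpl; try lra. }
  assert (Hx : forall t, (t <= n)%nat -> 0 <= x t) by (intros; unfold x; assert (Z := SS_le t); lra).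
  specialize (AB Hx X0 n (le_n n)).
  assert (0 <= / 2 ^ n * x n) by (apply Rmult_le_pos; [left; apply inv2_pos | apply Hx; lia]).
  assert (D : rsum n (fun t => / 2 ^ t * (x (S t) - x t)) =
    rsum n (fun t => / 2 ^ t * (Aof N W (offset kQ t + kQ t) - Aof N W (offset kQ t))) -
    rsum n (fun t => / 2 ^ t * (SS (S t) - SS t))).
  { rewrite <- rsum_minus. apply rsum_ext. intros. unfold x. rewrite offset_S. lra. }
  lra. Qed.

Lemma nsum_kQ : (nsum n kQ <= N)%nat.
Proof. apply INR_le. assert (H := sumEE n). unfold offset in H. rewrite <- H.
  rewrite <- rsum_one. apply rsum_le. intros. apply EE_bound; auto. Qed.
End GenQ.

Lemma u_zero n N W k : (forall t, (t < n)%nat -> k t = 0%nat) -> u_of n N W k = 0.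
Proof. intros H. rewrite u_formula. apply rsum_zero. intros. rewrite H by auto. rewrite Nat.add_0_r. lra. Qed.
Lemma rsum_ge_term m f t : (forall i, (i < m)%nat -> 0 <= f i) -> (t < m)%nat -> f t <= rsum m f.
Proof. induction m; simpl; intros H Ht. lia.
  assert (0 <= rsum m f) by (apply rsum_nonneg; intros; apply H; lia).
  destruct (Nat.eq_dec t m). subst. lra. assert (f t <= rsum m f) by (apply IHm; auto; lia).
  assert (0 <= f m) by (apply H; lia). lra. Qed.

Lemma ncount_exists N P : (1 <= ncount N P)%nat -> exists j, (j < N)%nat /\ P j = true.
Proof. induction N; simpl; intros H. lia. destruct (P N) eqn:E. exists N; split; auto.
  destruct IHN as [j [Hj Pj]]. lia. exists j; split; auto. Qed.

Lemma expand N W s Q : objective N W s Q =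
  powerRZ 2 s ^ 2 * rsum N (fun i => Q i ^ 2) - 2 * powerRZ 2 s * rsum N (fun i => Q i * W i) + rsum N (fun i => W i ^ 2).
Proof. unfold objective, sqnorm_dist.
  rewrite (rsum_ext N _ (fun i => (powerRZ 2 s ^ 2 * Q i ^ 2 + (- 2 * powerRZ 2 s) * (Q i * W i)) + W i ^ 2)) by (intros; ring).
  rewrite !rsum_plus, !rsum_scal. ring. Qed.

Lemma u_nonneg n N W k : 0 <= u_of n N W k.
Proof. unfold u_of. apply rsum_nonneg. intros. apply Rmult_le_pos. left; apply inv2_pos.
  unfold norm1. apply rsum_nonneg. intros; apply Rabs_pos. Qed.

Lemma v_pos n N k : admissible n N k -> 0 < v_of n k.
Proof. intros [_ [t [Ht Hk]]]. unfold v_of.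
  apply (Rlt_le_trans _ (INR (k t) * / 2 ^ (2 * t))).
  - apply Rmult_lt_0_compat. apply lt_0_INR. lia. apply inv2_pos.
  - apply (rsum_ge_term _ (fun t => INR (k t) * / 2 ^ (2 * t))); auto. intros. apply Rmult_le_pos. apply pos_INR. left; apply inv2_pos. Qed.

Lemma g_u0 v : 0 < v -> 0 <= g 0 v.
Proof. intros Hv. unfold g. replace (0 / v) with 0 by (field; lra). replace (0 ^ 2 / v) with 0 by (field; lra).
  assert (0 <= (powerRZ 2 (Rfloor (log2 (4 * 0 / (3 * v)))) - 0) ^ 2) by (apply pow2_ge_0). nra. Qed.

Definition k0 (t : nat) : nat := if Nat.eqb t 0 then 1%nat else 0%nat.
Lemma offset_k0 t : offset k0 t = if Nat.eqb t 0 then 0%nat else 1%nat.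
Proof. induction t; auto. rewrite offset_S, IHt. unfold k0. destruct t; simpl; auto. Qed.

Theorem theorem1 (b : nat) (N : nat) (W : nat -> R) (kstar : nat -> nat) :
  (2 <= b)%nat ->
  (exists i, (i < N)%nat /\ W i <> 0) ->
  (forall i j, (i < N)%nat -> (j < N)%nat -> i <> j -> Rabs (W i) <> Rabs (W j)) ->
  let n := (2 ^ (b - 2))%nat in
  admissible n N kstar ->
  (forall k, admissible n N k ->
     g (u_of n N W kstar) (v_of n kstar) <= g (u_of n N W k) (v_of n k)) ->
  feasibleQ n N (Qstar n N W kstar) /\
  (forall (s : Z) (Q : nat -> R), feasibleQ n N Q ->
     objective N W (sstar n N W kstar) (Qstar n N W kstar) <= objective N W s Q).
Proof.
  intros Hb [i0 [Hi0 Hw0]] Hd n Hadm Hmin.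
  split. apply Qstar_feas.
  assert (Hn : (1 <= n)%nat) by (unfold n; assert (2 ^ (b - 2) <> 0)%nat by (apply Nat.pow_nonzero; lia); lia).
  set (us := u_of n N W kstar). set (vs := v_of n kstar). set (gs := g us vs).
  assert (Hvs : 0 < vs) by (apply (v_pos n N); auto).
  assert (Hk0 : admissible n N k0).
  { split. change (offset k0 n <= N)%nat. rewrite offset_k0. destruct n; simpl; lia.
    exists O. split. lia. unfold k0. simpl. lia. }
  assert (Hu0 : 0 < u_of n N W k0).
  { rewrite u_formula. rewrite (rsum_single _ _ O).
    2:{ lia. }
    2:{ intros t' _ Ht. unfold k0. destruct (Nat.eqb_spec t' 0). lia. rewrite Nat.add_0_r; lra. }
    rewrite offset_k0. simpl. unfold k0. simpl.
    assert (A0 : Aof N W 0 = 0) by (unfold Aof; apply rsum_zero; intros; unfold ind; simpl; lra).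
    rewrite A0.
    destruct (ncount_exists N (fun i => Nat.ltb (rank N W i) 1)) as [j [Hj Rj]].
    { apply count_lt_rank; auto; lia. }
    apply Nat.ltb_lt in Rj.
    assert (Wj : 0 < Rabs (W j)).
    { destruct (Rlt_le_dec (Rabs (W j)) (Rabs (W i0))).
      - apply (rank_strict N W) in r; auto. lia.
      - assert (0 < Rabs (W i0)) by (apply Rabs_pos_lt; auto). lra. }
    assert (Rabs (W j) <= Aof N W 1).
    { unfold Aof. replace (Rabs (W j)) with (ind (Nat.ltb (rank N W j) 1) * Rabs (W j))
        by (apply Nat.ltb_lt in Rj; rewrite Rj; unfold ind; lra).
      apply (rsum_ge_term N (fun i => ind (Nat.ltb (rank N W i) 1) * Rabs (W i))); auto.
      intros. apply Rmult_le_pos. unfold ind; destruct (Nat.ltb _ _); lra. apply Rabs_pos. }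
    lra. }
  assert (Hgs : gs < 0).
  { apply (Rle_lt_trans _ _ _ (Hmin k0 Hk0)). apply g_neg; auto. apply (v_pos n N); auto. }
  assert (Hus : 0 < us).
  { destruct (Rle_lt_dec us 0); auto. assert (us = 0) by (assert (H := u_nonneg n N W kstar); fold us in H; lra).
    assert (0 <= gs) by (unfold gs; rewrite H; apply g_u0; auto). lra. }
  assert (Upper : objective N W (sstar n N W kstar) (Qstar n N W kstar) <= gs + rsum N (fun i => W i ^ 2)).
  { rewrite expand. rewrite sumQW_star. fold us.
    assert (Q2 := sumQsq_star n N W kstar Hd). fold vs in Q2.
    set (c := powerRZ 2 (sstar n N W kstar)).
    assert (E : gs = vs * c ^ 2 - 2 * c * us).
    { unfold gs, g, c, sstar. fold us vs. field. lra. }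
    assert (0 <= c ^ 2) by apply pow2_ge_0.
    assert (c ^ 2 * rsum N (fun i => Qstar n N W kstar i ^ 2) <= c ^ 2 * vs) by (apply Rmult_le_compat_l; auto).
    lra. }
  intros s Q HQ. apply (Rle_trans _ _ _ Upper). rewrite expand.
  set (c := powerRZ 2 s). assert (Hc : 0 < c) by apply powerRZ_pos.
  assert (QW := sumQW n N W Q HQ Hd). assert (Q2 := sumQsq n N Q HQ).
  rewrite Q2. set (uq := u_of n N W (kQ N Q)) in *. set (vq := v_of n (kQ N Q)).
  assert (0 <= vq) by (unfold vq, v_of; apply rsum_nonneg; intros; apply Rmult_le_pos; [apply pos_INR | left; apply inv2_pos]).
  destruct (Rle_lt_dec uq 0).
  - assert (0 <= c ^ 2 * vq) by (apply Rmult_le_pos; auto; apply pow2_ge_0).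
    assert (c * rsum N (fun i => Q i * W i) <= 0) by (assert (0 <= c * (- rsum N (fun i => Q i * W i))) by (apply Rmult_le_pos; lra); lra). lra.
  - assert (Hadq : admissible n N (kQ N Q)).
    { split. apply nsum_kQ; auto.
      destruct (classic (exists t, (t < n)%nat /\ kQ N Q t <> 0%nat)) as [HH|HH]; auto.
      exfalso. assert (uq = 0). { unfold uq. apply u_zero. intros t Ht. destruct (Nat.eq_dec (kQ N Q t) 0); auto. exfalso; apply HH; eauto. }
      lra. }
    assert (Hvq : 0 < vq) by (apply (v_pos n N); auto).
    assert (Sc := scale_lemma uq vq s r Hvq). fold c in Sc.
    assert (Hm := Hmin _ Hadq). fold us vs gs uq vq in Hm.
    assert (c * rsum N (fun i => Q i * W i) <= c * uq) by (apply Rmult_le_compat_l; lra).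
    assert (vq * c ^ 2 = c ^ 2 * vq) by ring. lra.
Qed.
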